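(* Fix $t\in\{0,1\}$, a nonempty set $\mathbb{A}\subseteq\mathbb{R}$ closed under addition, and a nonempty set $\mathbb{V}\subseteq\mathbb{R}$. Let $\mathcal{B}$ be the set of weighted directed bipartite graphs $B=(V,W,F,\omega,\delta)$ with $\omega\colon F\to\mathbb{A}$, $\delta\colon W\to\mathbb{V}$, and $\mathcal{H}$ the set of AMT-type systems hypergraphs with attribute sets $(\mathbb{A},\mathbb{V})$. Define $K\colon\mathcal{B}\to\mathcal{H}$ by $K(B)=(V,E,\mu_E,\chi)$ with $E=\{\mathcal{N}(w):w\in W\}$, $\mu_E(e)=|\{w\in W:\mathcal{N}(w)=e\}|$, and $\chi_e(q)=|\{w\in W:\mathcal{N}(w)=e,\ q_w=q\}|$. Define $K_r\colon\mathcal{H}\to\mathcal{B}$ by $K_r(V,E,\mu_E,\chi)=(V,W',F',\omega',\delta')$ with $W'=\{(e,q,i): e\in E,\ \chi_e(q)>0,\ i\in\{1,\dots,\chi_e(q)\}\}$; for $w=(e,q,i)$ with $q=(\sigma,\mu,\rho,(\mu^-,\mu^+))$: $(v,w)\in F'$ iff $v\in e$ and $-1\in\sigma(v)$, with $\omega'(v,w)=\mu^-(v)$; $(w,v)\in F'$ iff $v\in e$ and $+1\in\sigma(v)$, with $\omega'(w,v)=\mu^+(v)$; and $\delta'(w)=\rho(e)$. Then: (1) $K$ is well defined, i.e. $K(B)\in\mathcal{H}$ for all $B\in\mathcal{B}$; (2) $K_r$ is well defined and $K\circ K_r$ is the identity on $\mathcal{H}$, so $K$ is surjective; (3) $K_r(K(B))$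 is type-$t$ isomorphic to $B$ for every $B\in\mathcal{B}$; (4) $K$ induces a bijection $\widetilde K$ from the type-$t$ isomorphism classes of $\mathcal{B}$ to the type-$t$ isomorphism classes of $\mathcal{H}$, with $\widetilde K([B]_t)=[K(B)]_t$ and $\widetilde K^{-1}([H]_t)=[K_r(H)]_t$.
   Context: Orientation set: $\mathcal{I}=\{\{-1\},\{+1\},\{-1,+1\}\}$. For partial functions, $\operatorname{Dom}$ denotes the domain. Admissible attribute quadruple: for a finite set $e$, an admissible attribute quadruple on $e$ (w.r.t. $\mathbb{A},\mathbb{V}$) is $q=(\sigma,\mu,\rho,(\mu^-,\mu^+))$ with $\sigma\colon e\to\mathcal{I}$, $\mu\colon e\to\mathbb{A}$, $\rho\colon\{e\}\to\mathbb{V}$ (a label $\rho(e)$ of $e$ itself), and partial functions $\mu^-,\mu^+\colon e\rightharpoonup\mathbb{A}$ with $\operatorname{Dom}(\mu^-)=\{v\in e:-1\in\sigma(v)\}$, $\operatorname{Dom}(\mu^+)=\{v\in e:+1\in\sigma(v)\}$, and for $v\in e$: $\mu^-(v)=\mu(v)$ if $\sigma(v)=\{-1\}$; $\mu^+(v)=\mu(v)$ if $\sigma(v)=\{+1\}$; $\mu^-(v)+\mu^+(v)=\mu(v)$ if $\sigma(v)=\{-1,+1\}$. AMT-type systems hypergraph with attribute sets $(\mathbb{A},\mathbb{V})$: a tuple $H=(V,E,\mu_E,\chi)$ where $V$ is a finite set of labelled vertices, $E\subseteq\mathcal{P}(V)$ (the empty hyperedge allowed), $\mu_E\colon E\to\mathbb{N}_+$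 (hyperedge multiplicities), and for each $e\in E$, $\chi_e$ is a function from the admissible attribute quadruples on $e$ to $\mathbb{N}$ with $\sum_q\chi_e(q)=\mu_E(e)$. (In the paper this is a systems hypergraph whose distribution hierarchy consists of the orientation function $\widehat\sigma$, multiset function $\widehat\mu$, hyperedge-label function $\widehat\rho$ (rank 0) and negative/positive-oriented multiset function $\widehat\mu^{-/+}$ (rank 1, depending on $\widehat\sigma,\widehat\mu$); these are the marginals of the association function $\chi$, e.g. $\widehat\sigma_e(\sigma)=\sum_{q\text{ with first component }\sigma}\chi_e(q)$, so they are determined by the data above.) Isomorphisms of systems hypergraphs (same $\mathbb{A},\mathbb{V}$): a type-0 isomorphism $H\to H'$ is a bijection $\phi\colon V\to V'$ with $e\in E\iff\phi(e)\in E'$, $\mu'_{E'}(\phi(e))=\mu_E(e)$, and $\chi'_{\phi(e)}(\phi_*q)=\chi_e(q)$ for all $e,q$, where $\phi_*(\sigma,\mu,\rho,(\mu^-,\mu^+))=(\sigma\circ\phi^{-1},\mu\circ\phi^{-1},\rho',(\mu^-\circ\phi^{-1},\mu^+\circ\phi^{-1}))$ with $\rho'(\phi(e))=\rho(e)$; a type-1 isomorphism additionally preserves vertex labels, i.e. $V=V'$ and $\phi$ is the identity (so type-1 classes are singletons). Weighted directed bipartite graph: $B=(V,W,F,\omega,\delta)$ with $V$ (first part, labelled vertices) and $W$ (second part) finite disjoint sets, $F\subseteq(V\times W)\sqcup(W\times V)$, $\omega\colon F\to\mathbb{A}$, $\delta\colon W\to\mathbb{V}$. For $w\in W$: $\mathcal{N}_{\mathrm{in}}(w)=\{v:(v,w)\in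 F\}$, $\mathcal{N}_{\mathrm{out}}(w)=\{v:(w,v)\in F\}$, $\mathcal{N}(w)=\mathcal{N}_{\mathrm{in}}(w)\cup\mathcal{N}_{\mathrm{out}}(w)$. The induced quadruple $q_w=(\sigma_w,\mu_w,\rho_w,(\mu^-_w,\mu^+_w))$ on $\mathcal{N}(w)$: $\sigma_w(v)=\{-1\}$ if $v\in\mathcal{N}_{\mathrm{in}}(w)\setminus\mathcal{N}_{\mathrm{out}}(w)$, $\{+1\}$ if $v\in\mathcal{N}_{\mathrm{out}}(w)\setminus\mathcal{N}_{\mathrm{in}}(w)$, $\{-1,+1\}$ if in both; $\mu_w(v)$ is the sum of $\omega$ over the arcs between $v$ and $w$; $\rho_w(\mathcal{N}(w))=\delta(w)$; $\operatorname{Dom}(\mu^-_w)=\mathcal{N}_{\mathrm{in}}(w)$, $\mu^-_w(v)=\omega(v,w)$; $\operatorname{Dom}(\mu^+_w)=\mathcal{N}_{\mathrm{out}}(w)$, $\mu^+_w(v)=\omega(w,v)$. Isomorphisms of weighted directed bipartite graphs (same $\mathbb{A},\mathbb{V}$): a type-0 isomorphism $B\to B'$ is a bijection $V\cup W\to V'\cup W'$ mapping $V$ onto $V'$ and $W$ onto $W'$, preserving arcs in both directions, arc weights and $\delta$; a type-1 isomorphism additionally preserves first-part labels, i.e. $V=V'$ and it is the identity on $V$. *)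

(* Defs.v *)
From mathcomp Require Import all_boot all_algebra.
From mathcomp Require Import finmap.
From mathcomp Require Import Rstruct.
From Stdlib Require Import Rdefinitions.

Set Implicit Arguments.
Unset Strict Implicit.
Unset Printing Implicit Defensive.

Local Open Scope fset_scope.
Local Open Scope fmap_scope.

Section Defs.
(* L : universe of vertex labels (the vertices of V are labelled elements). *)
Variable L : choiceType.

Definition m1 : int := Negz 0. (* = -1 *)
Definition p1 : int := Posz 1.

Definition orientSet : seq {fset int} :=
  [:: [fset m1]; [fset p1]; [fset m1; p1]].

(* Attribute quadruple q = (sigma, mu, rho, (mu^-, mu^+)) on a finite set e:
   sigma, mu, mu^-, mu^+ are finite maps keyed by vertices (their domains
   are constrained by admissibility), rho is the label rho(e). *)
Definition quad : Type :=
  ({fmap L -> {fset int}} * {fmap L -> R} * R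
   * ({fmap L -> R} * {fmap L -> R}))%type.

Definition q_sigma (q : quad) := q.1.1.1.
Definition q_mu    (q : quad) := q.1.1.2.
Definition q_rho   (q : quad) := q.1.2.
Definition q_mum   (q : quad) := q.2.1.
Definition q_mup   (q : quad) := q.2.2.

Definition sig_at (q : quad) (v : L) : {fset int} := odflt fset0 (q_sigma q).[? v].

Definition admissible (AA VV : R -> Prop) (e : {fset L}) (q : quad) : Prop :=
  domf (q_sigma q) = e /\
  domf (q_mu q) = e /\
  VV (q_rho q) /\
  domf (q_mum q) = [fset v in e | m1 \in sig_at q v] /\
  domf (q_mup q) = [fset v in e | p1 \in sig_at q v] /\
  (forall v, v \in e ->
     sig_at q v \in orientSet /\
     (forall a, (q_mu q).[? v] = Some a -> AA a) /\
     (forall a, (q_mum q).[? v] = Some a -> AA a) /\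
     (forall a, (q_mup q).[? v] = Some a -> AA a) /\
     (sig_at q v = [fset m1] -> (q_mum q).[? v] = (q_mu q).[? v]) /\
     (sig_at q v = [fset p1] -> (q_mup q).[? v] = (q_mu q).[? v]) /\
     (sig_at q v = [fset m1; p1] ->
        exists a b c, (q_mum q).[? v] = Some a /\ (q_mup q).[? v] = Some b /\
                      (q_mu q).[? v] = Some c /\ Rplus a b = c)).

(* Systems hypergraphs (H = (V, E, mu_E, chi)).
   mu_E is extended by 0 outside E, chi_e is a finitely supported function
   on quadruples (extended by 0 outside the admissible quadruples on e),
   and chi_e is the zero function for e not in E. *)
Record hgraph := HGraph {
  hV : {fset L};
  hE : {fset {fset L}};
  hmu : {fset L} -> nat;
  hchi : {fset L} -> {fsfun quad -> nat with 0%N}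
}.

Definition inH (AA VV : R -> Prop) (H : hgraph) : Prop :=
  [/\ forall e, e \in hE H -> e `<=` hV H,
      forall e, (e \in hE H) = (0 < hmu H e)%N,
      forall e, e \notin hE H -> hchi H e = [fsfun],
      forall e q, (0 < hchi H e q)%N -> e \in hE H /\ admissible AA VV e q &
      forall e, e \in hE H -> (\sum_(q <- finsupp (hchi H e)) hchi H e q)%N = hmu H e].

(* The second part W is a finite type (hence disjoint from V).
   bin v w = Some a  iff  (v,w) in F with omega(v,w) = a;
   bout w v = Some a iff  (w,v) in F with omega(w,v) = a. *)
Record bigraph := BiGraph {
  bV : {fset L};
  bW : finType;
  bin : L -> bW -> option R;
  bout : bW -> L -> option R;
  bdelta : bW -> R
}.
Arguments bin : clear implicits.
Arguments bout : clear implicits.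
Arguments bdelta : clear implicits.

Definition inB (AA VV : R -> Prop) (B : bigraph) : Prop :=
  [/\ forall v w a, bin B v w = Some a -> v \in bV B /\ AA a,
      forall w v a, bout B w v = Some a -> v \in bV B /\ AA a &
      forall w, VV (bdelta B w)].

Definition N_in (B : bigraph) (w : bW B) : {fset L} :=
  [fset v in bV B | bin B v w != None].
Definition N_out (B : bigraph) (w : bW B) : {fset L} :=
  [fset v in bV B | bout B w v != None].
Definition N (B : bigraph) (w : bW B) : {fset L} := N_in w `|` N_out w.

Definition wt (o : option R) : R := match o with Some a => a | None => R0 end.

Definition qw (B : bigraph) (w : bW B) : quad :=
  ( [fmap v : N w =>
       if (val v \in N_in w) && (val v \notin N_out w) then [fset m1]
       else if (val v \in N_out w) && (val v \notin N_in w) then [fset p1]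
       else [fset m1; p1]],
    [fmap v : N w => Rplus (wt (bin B (val v) w)) (wt (bout B w (val v)))],
    bdelta B w,
    ( [fmap v : N_in w => wt (bin B (val v) w)],
      [fmap v : N_out w => wt (bout B w (val v))] ) ).

Definition K (B : bigraph) : hgraph :=
  HGraph (bV B)
    [fset N w | w : bW B]
    (fun e => #|[pred w : bW B | N w == e]|)
    (fun e => [fsfun q in [fset qw w | w : bW B] =>
                 #|[pred w : bW B | (N w == e) && (qw w == q)]| | 0%N]).

Definition Wlist (H : hgraph) : seq ({fset L} * quad * nat) :=
  flatten [seq flatten [seq [seq (e, q, i) | i <- iota 1 (hchi H e q)]
                        | q <- enum_fset (finsupp (hchi H e))]
          | e <- enum_fset (hE H)].

Definition Kr (H : hgraph) : bigraph :=
  @BiGraph (hV H) (seq_sub (Wlist H))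
    (fun v w => let: (e, q, i) := ssval w in
                if (v \in e) && (m1 \in sig_at q v) then (q_mum q).[? v] else None)
    (fun w v => let: (e, q, i) := ssval w in
                if (v \in e) && (p1 \in sig_at q v) then (q_mup q).[? v] else None)
    (fun w => let: (e, q, i) := ssval w in q_rho q).

(* Isomorphisms.  A bijection V -> V' is a function f : L -> L injective on V
   with f @` V = V'.  Type 1 additionally requires f to be the identity on V. *)
Definition isoB (t : nat) (B B' : bigraph) : Prop :=
  exists (f : L -> L) (g : bW B -> bW B'),
    {in bV B &, injective f} /\ f @` bV B = bV B' /\ bijective g /\
    (forall v w, v \in bV B -> bin B' (f v) (g w) = bin B v w) /\
    (forall w v, v \in bV B -> bout B' (g w) (f v) = bout B w v) /\
    (forall w, bdelta B' (g w) = bdelta B w) /\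
    (t = 1%N -> {in bV B, forall v, f v = v}).

(* push-forward of a finite map along f (relabelling of the keys) *)
Definition pushf (T : Type) (f : L -> L) (m : {fmap L -> T}) : {fmap L -> T} :=
  foldr (fun k acc => match m.[? k] with Some x => acc.[f k <- x] | None => acc end)
        [fmap] (enum_fset (domf m)).

Definition pushq (f : L -> L) (q : quad) : quad :=
  (pushf f (q_sigma q), pushf f (q_mu q), q_rho q,
   (pushf f (q_mum q), pushf f (q_mup q))).

Definition isoH (AA VV : R -> Prop) (t : nat) (H H' : hgraph) : Prop :=
  exists f : L -> L,
    {in hV H &, injective f} /\ f @` hV H = hV H' /\
    (forall e, e `<=` hV H -> (e \in hE H) = (f @` e \in hE H')) /\
    (forall e, e \in hE H -> hmu H' (f @` e) = hmu H e) /\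
    (forall e q, e \in hE H -> admissible AA VV e q ->
       hchi H' (f @` e) (pushq f q) = hchi H e q) /\
    (t = 1%N -> {in hV H, forall v, f v = v}).

Definition clsB (AA VV : R -> Prop) (t : nat) (B : bigraph) : bigraph -> Prop :=
  fun B' => inB AA VV B' /\ isoB t B B'.
Definition clsH (AA VV : R -> Prop) (t : nat) (H : hgraph) : hgraph -> Prop :=
  fun H' => inH AA VV H' /\ isoH AA VV t H H'.

End Defs.

(* Main.v *)
Require Import Defs.
From mathcomp Require Import all_boot all_algebra.
From mathcomp Require Import finmap.
From mathcomp Require Import Rstruct.
From Stdlib Require Import Rdefinitions.
From Stdlib Require RIneq Raxioms FunctionalExtensionality PropExtensionality.

Set Implicit Arguments.
Unset Strict Implicit.
Unset Printing Implicit Defensive.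
Local Open Scope fset_scope.
Local Open Scope fmap_scope.

Lemma fnd_fmapF (L : choiceType) (T : Type) (A : {fset L}) (F : L -> T) k :
  ([fmap v : A => F (fsval v)]).[? k] = if k \in A then Some (F k) else None.
Proof.
by case: fndP => [kA|kA] //; rewrite ffunE.
Qed.

Lemma pushf_fnd_seq (L : choiceType) (T : Type) (f : L -> L) (m : {fmap L -> T}) s y :
  {subset s <= domf m} ->
  (foldr (fun k acc => match m.[? k] with Some x => acc.[f k <- x] | None => acc end)
        [fmap] s).[? y] =
  oapp (fun k => m.[? k]) None (ohead [seq k <- s | f k == y]).
Proof.
elim: s => [|k s IH] sub /=; first by rewrite fnd_fmap0.
have ks : k \in domf m by apply: sub; rewrite inE eqxx.
rewrite (in_fnd ks) fnd_set.
case: (eqVneq y (f k)) => [->|ne]; first by rewrite /= (in_fnd ks).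
rewrite IH // => x xs; apply: sub; by rewrite inE xs orbT.
Qed.

Lemma pushf_fnd (L : choiceType) (T : Type) (f : L -> L) (m : {fmap L -> T}) y :
  (pushf f m).[? y] = oapp (fun k => m.[? k]) None
     (ohead [seq k <- enum_fset (domf m) | f k == y]).
Proof. by rewrite /pushf pushf_fnd_seq. Qed.

Lemma pushf_in (L : choiceType) (T : Type) (f : L -> L) (m : {fmap L -> T}) (D : {fset L}) k :
  domf m `<=` D -> {in D &, injective f} -> k \in D ->
  (pushf f m).[? f k] = m.[? k].
Proof.
move=> /fsubsetP sub inj kD; rewrite pushf_fnd.
case E: [seq k0 <- enum_fset (domf m) | f k0 == f k] => [|k0 s] /=.
  case: fndP => // km; have : k \in [seq k0 <- enum_fset (domf m) | f k0 == f k].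
    by rewrite mem_filter eqxx.
  by rewrite E.
have : k0 \in [seq k0 <- enum_fset (domf m) | f k0 == f k] by rewrite E inE eqxx.
by rewrite mem_filter => /andP [/eqP fk k0m]; rewrite (inj _ _ (sub _ k0m) kD fk).
Qed.

Lemma pushf_out (L : choiceType) (T : Type) (f : L -> L) (m : {fmap L -> T}) (D : {fset L}) y :
  domf m `<=` D -> y \notin f @` D -> (pushf f m).[? y] = None.
Proof.
move=> /fsubsetP sub yD; rewrite pushf_fnd.
case E: [seq k0 <- enum_fset (domf m) | f k0 == y] => [|k0 s] //=.
have : k0 \in [seq k0 <- enum_fset (domf m) | f k0 == y] by rewrite E inE eqxx.
rewrite mem_filter => /andP [/eqP fk k0m].
by move: yD; rewrite -fk in_imfset // sub.
Qed.

Lemma mem_imf_inj (L : choiceType) (f : L -> L) (D A : {fset L}) v :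
  {in D &, injective f} -> A `<=` D -> v \in D -> (f v \in f @` A) = (v \in A).
Proof.
move=> inj /fsubsetP AD vD; apply/idP/idP; last by move=> vA; rewrite in_imfset.
by case/imfsetP => u /= uA /(inj _ _ vD (AD _ uA)) ->.
Qed.

Lemma img_eq (L : choiceType) (f : L -> L) (D A A' : {fset L}) :
  A `<=` D -> A' `<=` f @` D -> (forall v, v \in D -> (f v \in A') = (v \in A)) ->
  A' = f @` A.
Proof.
move=> /fsubsetP AD /fsubsetP A'D H; apply/fsetP => y; apply/idP/idP.
  by move=> yA'; case/imfsetP: (A'D _ yA') => v /= vD E; subst y; apply/imfsetP; exists v => //; rewrite -H.
by case/imfsetP => v /= vA ->; rewrite H ?AD.
Qed.

Lemma imf_sub (L : choiceType) (f : L -> L) (A D : {fset L}) :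
  A `<=` D -> f @` A `<=` f @` D.
Proof.
move=> /fsubsetP AD; apply/fsubsetP => y /imfsetP [v /= vA ->].
by rewrite in_imfset // AD.
Qed.

Lemma domf_pushf (L : choiceType) (T : Type) (f : L -> L) (m : {fmap L -> T}) (D : {fset L}) :
  domf m `<=` D -> domf (pushf f m) `<=` f @` D.
Proof.
move=> sub; apply/fsubsetP => y yd; apply/negPn/negP => yD.
by move: yd; rewrite -fndSome (pushf_out sub yD).
Qed.

Lemma pushf_id (L : choiceType) (T : Type) (m : {fmap L -> T}) :
  pushf id m = m.
Proof.
apply/fmapP => y; case: (boolP (y \in domf m)) => ym.
  by rewrite (@pushf_in _ _ id m (domf m) y) //; move=> ? ? _ _.
rewrite (not_fnd ym) (@pushf_out _ _ id m (domf m) y) //.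
by rewrite imfset_id.
Qed.

Lemma pushf_fnd2 (L : choiceType) (T : Type) (f : L -> L) (m : {fmap L -> T}) (D : {fset L}) y :
  domf m `<=` D -> {in D &, injective f} ->
  (pushf f m).[? y] = if y \in f @` D then
     oapp (fun k => m.[? k]) None (ohead [seq k <- enum_fset D | f k == y]) else None.
Proof.
move=> sub inj; case: ifP => yD; last by rewrite (pushf_out sub) ?yD.
case/imfsetP: yD => v /= vD ->; rewrite (pushf_in sub inj vD).
case E: [seq k <- enum_fset D | f k == f v] => [|k s] /=.
  have : v \in [seq k <- enum_fset D | f k == f v] by rewrite mem_filter eqxx.
  by rewrite E.
have : k \in [seq k <- enum_fset D | f k == f v] by rewrite E inE eqxx.
by rewrite mem_filter => /andP [/eqP fk kD]; rewrite (inj _ _ kD vD fk).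
Qed.

Lemma pushf_comp (L : choiceType) (T : Type) (f f' : L -> L) (m : {fmap L -> T}) (D : {fset L}) :
  domf m `<=` D -> {in D &, injective f} -> {in f @` D &, injective f'} ->
  pushf f' (pushf f m) = pushf (f' \o f) m.
Proof.
move=> sub inj inj'.
have injc : {in D &, injective (f' \o f)}.
  by move=> a b aD bD /= /inj' E; apply: inj => //; apply: E; rewrite in_imfset.
apply/fmapP => y; case: (boolP (y \in (f' \o f) @` D)) => yD.
  case/imfsetP: yD => v /= vD ->.
  rewrite (pushf_in (domf_pushf f sub) inj') ?in_imfset //.
  by rewrite (pushf_in sub inj vD) (pushf_in sub injc vD).
rewrite (pushf_out sub yD) (pushf_out (domf_pushf f sub)) //.
by rewrite -imfset_comp.
Qed.

Lemma pushf_inj (L : choiceType) (T : Type) (f : L -> L) (m m' : {fmap L -> T}) (D : {fset L}) :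
  domf m `<=` D -> domf m' `<=` D -> {in D &, injective f} ->
  pushf f m = pushf f m' -> m = m'.
Proof.
move=> s s' inj E; apply/fmapP => k; case: (boolP (k \in D)) => kD.
  by rewrite -(pushf_in s inj kD) -(pushf_in s' inj kD) E.
rewrite !not_fnd //; apply: contra kD; [exact: (fsubsetP s')|exact: (fsubsetP s)].
Qed.

Lemma domf_pushf_eq (L : choiceType) (T : Type) (f : L -> L) (m : {fmap L -> T}) (D : {fset L}) :
  domf m `<=` D -> {in D &, injective f} -> domf (pushf f m) = f @` domf m.
Proof.
move=> sub inj; apply: (img_eq (D := D)) => //; first exact: domf_pushf.
by move=> v vD; rewrite -!fndSome (pushf_in sub inj vD).
Qed.

Definition qsub (L : choiceType) (q : quad L) (D : {fset L}) :=
  [/\ domf (q_sigma q) `<=` D, domf (q_mu q) `<=` D, domf (q_mum q) `<=` D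
    & domf (q_mup q) `<=` D].

Lemma qsub_trans (L : choiceType) (q : quad L) (D D' : {fset L}) :
  qsub q D -> D `<=` D' -> qsub q D'.
Proof. by case=> a b c d s; split; apply: fsubset_trans s. Qed.

Lemma adm_qsub (L : choiceType) AA VV (e : {fset L}) q :
  admissible AA VV e q -> qsub q e.
Proof.
case=> [a [b [_ [c [d _]]]]]; split; rewrite ?a ?b ?c ?d //.
  by apply/fsubsetP => v; rewrite inE => /andP [].
by apply/fsubsetP => v; rewrite inE => /andP [].
Qed.

Lemma pushq_id (L : choiceType) (q : quad L) : pushq id q = q.
Proof.
by case: q => [[[s m] r] [a b]]; rewrite /pushq /q_sigma /q_mu /q_rho /q_mum /q_mup /= !pushf_id.
Qed.

Lemma pushq_comp (L : choiceType) (f f' : L -> L) (q : quad L) (D : {fset L}) :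
  qsub q D -> {in D &, injective f} -> {in f @` D &, injective f'} ->
  pushq f' (pushq f q) = pushq (f' \o f) q.
Proof.
case=> a b c d inj inj'.
by rewrite /pushq /q_sigma /q_mu /q_rho /q_mum /q_mup /= !(pushf_comp _ inj inj').
Qed.

Lemma pushq_inj (L : choiceType) (f : L -> L) (q q' : quad L) (D : {fset L}) :
  qsub q D -> qsub q' D -> {in D &, injective f} ->
  pushq f q = pushq f q' -> q = q'.
Proof.
case: q => [[[s m] r] [a b]]; case: q' => [[[s' m'] r'] [a' b']].
rewrite /qsub /q_sigma /q_mu /q_mum /q_mup /=.
case=> /= h1 h2 h3 h4; case=> /= h1' h2' h3' h4' inj.
rewrite /pushq /q_sigma /q_mu /q_rho /q_mum /q_mup /= => [[E1 E2 E3 E4 E5]].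
by rewrite (pushf_inj h1 h1' inj E1) (pushf_inj h2 h2' inj E2) E3
  (pushf_inj h3 h3' inj E4) (pushf_inj h4 h4' inj E5).
Qed.

Lemma sig_at_push (L : choiceType) (f : L -> L) (q : quad L) (D : {fset L}) v :
  qsub q D -> {in D &, injective f} -> v \in D ->
  sig_at (pushq f q) (f v) = sig_at q v.
Proof. by case=> a _ _ _ inj vD; rewrite /sig_at /= (pushf_in a inj vD). Qed.

Lemma adm_push (L : choiceType) AA VV (f : L -> L) (e D : {fset L}) q :
  admissible AA VV e q -> e `<=` D -> {in D &, injective f} ->
  admissible AA VV (f @` e) (pushq f q).
Proof.
move=> adm eD inj; have qs := qsub_trans (adm_qsub adm) eD.
have [h1 h2 h3 h4] := qs.
case: adm => [a [b [vr [c [d H]]]]].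
have sg v : v \in D -> sig_at (pushq f q) (f v) = sig_at q v by apply: sig_at_push.
split; first by rewrite /= (domf_pushf_eq h1 inj) a.
split; first by rewrite /= (domf_pushf_eq h2 inj) b.
split; first exact: vr.
have subD : [fset v in e | m1 \in sig_at q v] `<=` D.
  by apply: fsubset_trans eD; apply/fsubsetP => v; rewrite inE => /andP [].
have subD' : [fset v in e | p1 \in sig_at q v] `<=` D.
  by apply: fsubset_trans eD; apply/fsubsetP => v; rewrite inE => /andP [].
split.
  rewrite /= (domf_pushf_eq h3 inj) c; symmetry; apply: (img_eq (D := D)) => //.
    by apply: fsubset_trans (imf_sub f eD); apply/fsubsetP => v; rewrite inE => /andP [].
  move=> v vD; rewrite !inE (mem_imf_inj inj eD vD) sg //.
split.
  rewrite /= (domf_pushf_eq h4 inj) d; symmetry; apply: (img_eq (D := D)) => //.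
    by apply: fsubset_trans (imf_sub f eD); apply/fsubsetP => v; rewrite inE => /andP [].
  move=> v vD; rewrite !inE (mem_imf_inj inj eD vD) sg //.
move=> y /imfsetP [v /= ve ->]; have vD := fsubsetP eD v ve.
rewrite sg // /= (pushf_in h2 inj vD) (pushf_in h3 inj vD) (pushf_in h4 inj vD).
exact: H.
Qed.

Lemma fnd_fmapIn (L : choiceType) (T : Type) (A : {fset L}) (E : A -> T) k (kA : k \in A) :
  ([fmap v : A => E v]).[? k] = Some (E [` kA]).
Proof. by rewrite (in_fnd kA) ffunE; congr (Some (E _)); apply: val_inj. Qed.

Lemma fnd_fmapOut (L : choiceType) (T : Type) (A : {fset L}) (E : A -> T) k :
  k \notin A -> ([fmap v : A => E v]).[? k] = None.
Proof. by move=> kA; rewrite not_fnd. Qed.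

Notation NB := Defs.N.

Lemma Nin_sub (L : choiceType) (B : bigraph L) (w : bW B) : N_in w `<=` bV B.
Proof. by apply/fsubsetP => v; rewrite inE => /andP []. Qed.
Lemma Nout_sub (L : choiceType) (B : bigraph L) (w : bW B) : N_out w `<=` bV B.
Proof. by apply/fsubsetP => v; rewrite inE => /andP []. Qed.
Lemma N_sub (L : choiceType) (B : bigraph L) (w : bW B) : NB w `<=` bV B.
Proof. by rewrite fsubUset Nin_sub Nout_sub. Qed.

Lemma K_chi (L : choiceType) (B : bigraph L) e q :
  hchi (K B) e q = #|[pred w : bW B | (NB w == e) && (qw w == q)]|.
Proof.
rewrite /= fsfun_fun; case: ifP => // qS; symmetry; apply: eq_card0 => w.
rewrite !inE; apply/negP => /andP [_ /eqP E]; move: qS.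
by rewrite -E in_imfset.
Qed.

Lemma imf_inj_sub (L : choiceType) (f : L -> L) (D A A' : {fset L}) :
  {in D &, injective f} -> A `<=` D -> A' `<=` D -> f @` A = f @` A' -> A = A'.
Proof.
move=> inj s s' E; apply/fsetP => v; case: (boolP (v \in D)) => vD.
  by rewrite -(mem_imf_inj inj s vD) E (mem_imf_inj inj s' vD).
apply/idP/idP => vA; [by case/negP: vD; exact: (fsubsetP s)|].
by case/negP: vD; exact: (fsubsetP s').
Qed.

Lemma card_bij (T T' : finType) (g : T -> T') (P : pred T') :
  bijective g -> #|[pred x | P (g x)]| = #|[pred y | P y]|.
Proof.
move=> bij; have [h gh hg] := bij; rewrite -(card_image (can_inj gh)).
apply: eq_card => y; rewrite !inE; apply/imageP/idP => [[x xP ->]|yP] //.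
by exists (h y); rewrite ?inE hg.
Qed.

Lemma eq_imf_inj (L : choiceType) (f : L -> L) (D A A' : {fset L}) :
  {in D &, injective f} -> A `<=` D -> A' `<=` D -> (f @` A == f @` A') = (A == A').
Proof. by move=> inj s s'; apply/eqP/eqP => [/(imf_inj_sub inj s s')|->]. Qed.

Lemma qsub_qw (L : choiceType) (B : bigraph L) (w : bW B) : qsub (qw w) (bV B).
Proof. by split; rewrite /= ?N_sub ?Nin_sub ?Nout_sub. Qed.

Section IsoB.
Variables (L : choiceType) (B B' : bigraph L) (f : L -> L) (g : bW B -> bW B').
Hypotheses (inj : {in bV B &, injective f}) (img : f @` bV B = bV B')
  (hin : forall v w, v \in bV B -> bin (f v) (g w) = bin v w)
  (hout : forall w v, v \in bV B -> bout (g w) (f v) = bout w v)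
  (hdelta : forall w, bdelta (g w) = bdelta w).

Lemma Nin_iso w : N_in (g w) = f @` N_in w.
Proof.
apply: (img_eq (D := bV B)); first exact: Nin_sub.
  by rewrite img; apply: Nin_sub.
by move=> v vD; rewrite !inE -img in_imfset //= vD hin.
Qed.

Lemma Nout_iso w : N_out (g w) = f @` N_out w.
Proof.
apply: (img_eq (D := bV B)); first exact: Nout_sub.
  by rewrite img; apply: Nout_sub.
by move=> v vD; rewrite !inE -img in_imfset //= vD hout.
Qed.

Lemma N_iso w : NB (g w) = f @` NB w.
Proof.
apply: (img_eq (D := bV B)); first exact: N_sub.
  by rewrite img; apply: N_sub.
move=> v vD; rewrite /Defs.N !in_fsetU Nin_iso Nout_iso.
by rewrite (mem_imf_inj inj (Nin_sub _) vD) (mem_imf_inj inj (Nout_sub _) vD).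
Qed.

Lemma notin_img y : y \notin f @` bV B -> forall (A : {fset L}), A `<=` bV B' -> y \notin A.
Proof. by move=> yD A AB; apply: contra yD; rewrite img; apply: (fsubsetP AB). Qed.

Lemma qw_iso w : qw (g w) = pushq f (qw w).
Proof.
rewrite /qw /pushq /q_sigma /q_mu /q_rho /q_mum /q_mup /=.
have ND := N_sub w; have NiD := Nin_sub w; have NoD := Nout_sub w.
congr (_, _, _, (_, _)); [apply/fmapP => y|apply/fmapP => y|exact: hdelta|apply/fmapP => y|apply/fmapP => y].
- case: (boolP (y \in f @` bV B)) => yD; last first.
    by rewrite (pushf_out (D := bV B)) // (fnd_fmapOut _ (notin_img yD (N_sub _))).
  case/imfsetP: yD => v /= vD ->; rewrite (pushf_in (D := bV B)) //.
  case: (boolP (v \in NB w)) => vN; last first.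
    have vN' : f v \notin NB (g w) by rewrite N_iso (mem_imf_inj inj _ vD).
    by rewrite (fnd_fmapOut _ vN) (fnd_fmapOut _ vN').
  have vN' : f v \in NB (g w) by rewrite N_iso (mem_imf_inj inj _ vD).
  rewrite (fnd_fmapIn _ vN) (fnd_fmapIn _ vN') /=.
  by rewrite Nin_iso Nout_iso !(mem_imf_inj inj _ vD).
- case: (boolP (y \in f @` bV B)) => yD; last first.
    by rewrite (pushf_out (D := bV B)) // (fnd_fmapOut _ (notin_img yD (N_sub _))).
  case/imfsetP: yD => v /= vD ->; rewrite (pushf_in (D := bV B)) //.
  case: (boolP (v \in NB w)) => vN; last first.
    have vN' : f v \notin NB (g w) by rewrite N_iso (mem_imf_inj inj _ vD).
    by rewrite (fnd_fmapOut _ vN) (fnd_fmapOut _ vN').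
  have vN' : f v \in NB (g w) by rewrite N_iso (mem_imf_inj inj _ vD).
  rewrite (fnd_fmapIn _ vN) (fnd_fmapIn _ vN') /=.
  by rewrite hin // hout.
- case: (boolP (y \in f @` bV B)) => yD; last first.
    by rewrite (pushf_out (D := bV B)) // (fnd_fmapOut _ (notin_img yD (Nin_sub _))).
  case/imfsetP: yD => v /= vD ->; rewrite (pushf_in (D := bV B)) //.
  case: (boolP (v \in N_in w)) => vN; last first.
    have vN' : f v \notin N_in (g w) by rewrite Nin_iso (mem_imf_inj inj _ vD).
    by rewrite (fnd_fmapOut _ vN) (fnd_fmapOut _ vN').
  have vN' : f v \in N_in (g w) by rewrite Nin_iso (mem_imf_inj inj _ vD).
  rewrite (fnd_fmapIn _ vN) (fnd_fmapIn _ vN') /=.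
  by rewrite hin.
- case: (boolP (y \in f @` bV B)) => yD; last first.
    by rewrite (pushf_out (D := bV B)) // (fnd_fmapOut _ (notin_img yD (Nout_sub _))).
  case/imfsetP: yD => v /= vD ->; rewrite (pushf_in (D := bV B)) //.
  case: (boolP (v \in N_out w)) => vN; last first.
    have vN' : f v \notin N_out (g w) by rewrite Nout_iso (mem_imf_inj inj _ vD).
    by rewrite (fnd_fmapOut _ vN) (fnd_fmapOut _ vN').
  have vN' : f v \in N_out (g w) by rewrite Nout_iso (mem_imf_inj inj _ vD).
  rewrite (fnd_fmapIn _ vN) (fnd_fmapIn _ vN') /=.
  by rewrite hout.
Qed.

Hypothesis gbij : bijective g.

Lemma K_iso AA VV (t : nat) : (t = 1%N -> {in bV B, forall v, f v = v}) ->
  isoH AA VV t (K B) (K B').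
Proof.
move=> t1; exists f; split; first exact: inj.
split; first exact: img.
have NB_e e : e \in hE (K B) -> e `<=` bV B.
  by case/imfsetP => w /= _ ->; apply: N_sub.
split.
  move=> e eV; apply/imfsetP/imfsetP => /=.
    by case=> w _ ->; exists (g w) => //; rewrite N_iso.
  case=> w' _ E; have [h gh hg] := gbij; exists (h w') => //.
  by apply: (imf_inj_sub inj) => //; [exact: N_sub|rewrite E -N_iso hg].
split.
  move=> e eE /=; rewrite -(card_bij _ gbij); apply: eq_card => w.
  by rewrite !inE N_iso (eq_imf_inj inj (N_sub _) (NB_e _ eE)).
split; last exact: t1.
move=> e q eE adm; rewrite !K_chi -(card_bij _ gbij); apply: eq_card => w.
rewrite !inE N_iso qw_iso (eq_imf_inj inj (N_sub _) (NB_e _ eE)).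
congr (_ && _); apply/eqP/eqP => [|->] //.
apply: (pushq_inj (D := bV B)) => //; first exact: qsub_qw.
exact: (qsub_trans (adm_qsub adm) (NB_e _ eE)).
Qed.

End IsoB.

Lemma isoH_refl (L : choiceType) AA VV t (H : hgraph L) : isoH AA VV t H H.
Proof.
exists id; split; first by move=> ? ? _ _.
split; first exact: imfset_id.
split; first by move=> e _; rewrite imfset_id.
split; first by move=> e _; rewrite imfset_id.
split; last by [].
by move=> e q _ _; rewrite imfset_id pushq_id.
Qed.

Lemma isoH_trans (L : choiceType) AA VV t (H1 H2 H3 : hgraph L) :
  inH AA VV H1 -> isoH AA VV t H1 H2 -> isoH AA VV t H2 H3 -> isoH AA VV t H1 H3.
Proof.
case=> sub1 _ _ _ _.
case=> f [inj [img [hE1 [hmu1 [hchi1 t1]]]]].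
case=> f' [inj' [img' [hE2 [hmu2 [hchi2 t2]]]]].
have inj'' : {in f @` hV H1 &, injective f'} by rewrite img.
have injc : {in hV H1 &, injective (f' \o f)}.
  move=> a b aD bD /= E; apply: inj => //.
  by apply: inj' E; rewrite -img; apply: in_imfset.
exists (f' \o f); split; first exact: injc.
split; first by rewrite imfset_comp img img'.
have fe e : e `<=` hV H1 -> f @` e `<=` hV H2 by move=> s; rewrite -img; apply: imf_sub.
split; first by move=> e s; rewrite imfset_comp hE1 // hE2 // fe.
split.
  move=> e eE; rewrite imfset_comp hmu2 ?hmu1 //.
  by rewrite -hE1 // sub1.
split.
  move=> e q eE adm; have eV := sub1 _ eE.
  rewrite imfset_comp -(pushq_comp (D := hV H1)) //; last first.
    exact: (qsub_trans (adm_qsub adm) eV).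
  rewrite hchi2 ?hchi1 //; first by rewrite -hE1.
  exact: (adm_push adm eV inj).
move=> t_1 v vV /=; rewrite t1 // t2 // -img; apply/imfsetP; exists v => //; by rewrite t1.
Qed.

Lemma uniq_flatten_map (S T : eqType) (F : S -> seq T) (s : seq S) :
  uniq s -> (forall x, x \in s -> uniq (F x)) ->
  (forall x y z, x \in s -> y \in s -> z \in F x -> z \in F y -> x = y) ->
  uniq (flatten (map F s)).
Proof.
elim: s => //= x s IH /andP [xs us] uF dis.
rewrite cat_uniq uF ?inE ?eqxx // IH //; last first.
- by move=> a b z ai bi; apply: dis; rewrite inE ?ai ?bi orbT.
- by move=> a ai; apply: uF; rewrite inE ai orbT.
rewrite andbT; apply/hasPn => z /flatten_mapP [y ys zy]; apply/negP => zx.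
have := dis x y z; rewrite !inE eqxx ys orbT => /(_ isT isT zx zy) E.
by move: xs; rewrite E ys.
Qed.

Lemma size_flatten_map (S T : Type) (F : S -> seq T) (s : seq S) :
  size (flatten (map F s)) = \sum_(x <- s) size (F x).
Proof. by elim: s => [|x s IH] /=; rewrite ?big_nil ?big_cons // size_cat IH. Qed.

Lemma count_flatten_map (S T : Type) (F : S -> seq T) (s : seq S) (P : pred T) :
  count P (flatten (map F s)) = \sum_(x <- s) count P (F x).
Proof. by elim: s => [|x s IH] /=; rewrite ?big_nil ?big_cons // count_cat IH. Qed.

Lemma mem_Wlist (L : choiceType) (H : hgraph L) e q i :
  ((e, q, i) \in Wlist H) =
  [&& e \in hE H, q \in finsupp (hchi H e), 0 < i & i <= hchi H e q].
Proof.
apply/idP/idP.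
  case/flatten_mapP => e' e'E /flatten_mapP [q' q'S /mapP [i' i'I [-> -> ->]]].
  by rewrite e'E q'S; move: i'I; rewrite mem_iota add1n ltnS.
case/and4P => eE qS i0 iq; apply/flatten_mapP; exists e => //.
apply/flatten_mapP; exists q => //; apply/mapP; exists i => //.
by rewrite mem_iota add1n ltnS i0.
Qed.

Lemma uniq_Wlist (L : choiceType) (H : hgraph L) : uniq (Wlist H).
Proof.
apply: uniq_flatten_map; first exact: fset_uniq.
  move=> e _; apply: uniq_flatten_map; first exact: fset_uniq.
    by move=> q _; rewrite map_inj_uniq ?iota_uniq // => a b [].
  by move=> a b z _ _ /mapP [i _ ->] /mapP [j _ []].
move=> a b z _ _ /flatten_mapP [q _ /mapP [i _ ->]].
by case/flatten_mapP => q' _ /mapP [j _ []].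
Qed.

Lemma size_Wlist (L : choiceType) (H : hgraph L) :
  size (Wlist H) = (\sum_(e <- hE H) \sum_(q <- finsupp (hchi H e)) hchi H e q)%N.
Proof.
rewrite /Wlist size_flatten_map; apply: eq_bigr => e _.
by rewrite size_flatten_map; apply: eq_bigr => q _; rewrite size_map size_iota.
Qed.

Lemma sum_if_eq (T : eqType) (s : seq T) (a : T) (F : T -> nat) :
  uniq s -> (\sum_(x <- s) (if x == a then F x else 0))%N = if a \in s then F a else 0%N.
Proof.
elim: s => [|x s IH] /=; first by rewrite big_nil.
case/andP => xs us; rewrite big_cons IH // inE.
case: (eqVneq x a) => [E|_] /=; last by [].
by subst x; rewrite (negPf xs) addn0.
Qed.

Lemma count_Wlist (L : choiceType) (H : hgraph L) e q :
  count (fun x => (x.1.1 == e) && (x.1.2 == q)) (Wlist H) =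
  if (e \in hE H) && (q \in finsupp (hchi H e)) then hchi H e q else 0%N.
Proof.
rewrite /Wlist count_flatten_map.
rewrite (eq_bigr (fun e' => if e' == e then
   (if q \in finsupp (hchi H e') then hchi H e' q else 0%N) else 0%N)); last first.
  move=> e' _; rewrite count_flatten_map.
  rewrite (eq_bigr (fun q' => if q' == q then (if e' == e then hchi H e' q' else 0%N) else 0%N)).
    by rewrite sum_if_eq ?fset_uniq //; case: (e' == e); case: ifP.
  move=> q' _; rewrite count_map /preim /=.
  by case: (e' == e); case: (q' == q); rewrite /= ?count_pred0 // count_predT size_iota.
by rewrite sum_if_eq ?fset_uniq //; case: (e \in hE H).
Qed.

Lemma count_Wlist1 (L : choiceType) (H : hgraph L) e :
  count (fun x => x.1.1 == e) (Wlist H) =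
  if (e \in hE H) then (\sum_(q <- finsupp (hchi H e)) hchi H e q)%N else 0%N.
Proof.
rewrite /Wlist count_flatten_map.
rewrite (eq_bigr (fun e' => if e' == e then
   (\sum_(q <- finsupp (hchi H e')) hchi H e' q)%N else 0%N)); last first.
  move=> e' _; rewrite count_flatten_map; case: (eqVneq e' e) => [->|ne].
    by apply: eq_bigr => q' _; rewrite count_map /preim /= eqxx count_predT size_iota.
  by rewrite big1 // => q' _; rewrite count_map /preim /= (negPf ne) count_pred0.
by rewrite sum_if_eq ?fset_uniq.
Qed.

Lemma card_seq_sub_pred (T : choiceType) (s : seq T) (P : pred T) :
  uniq s -> #|[pred x : seq_sub s | P (ssval x)]| = count P s.
Proof.
move=> us; rewrite cardE -(size_map (@ssval _ s)) -size_filter.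
apply: perm_size; apply: uniq_perm.
- by rewrite map_inj_uniq ?enum_uniq //; apply: val_inj.
- exact: filter_uniq.
move=> y; rewrite mem_filter; apply/mapP/andP => [[x]|[Py ys]].
  by rewrite mem_enum inE => Px ->; split => //; apply: ssvalP.
by exists (SeqSub ys); rewrite ?mem_enum ?inE.
Qed.

Lemma sig_some (L : choiceType) (q : quad L) y :
  y \in domf (q_sigma q) -> (q_sigma q).[? y] = Some (sig_at q y).
Proof. by rewrite /sig_at; case: fndP. Qed.

Lemma fnd_some (L : choiceType) (T : Type) (m : {fmap L -> T}) y :
  y \in domf m -> exists a, m.[? y] = Some a.
Proof. by case: fndP => // yd _; eexists. Qed.

Lemma orientP (L : choiceType) (q : quad L) v :
  sig_at q v \in orientSet ->
  [\/ sig_at q v = [fset m1], sig_at q v = [fset p1] | sig_at q v = [fset m1; p1]].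
Proof. by rewrite /orientSet !inE => /or3P [/eqP|/eqP|/eqP]; [constructor 1|constructor 2|constructor 3]. Qed.

Lemma inH_adm (L : choiceType) AA VV (H : hgraph L) e q :
  inH AA VV H -> q \in finsupp (hchi H e) -> e \in hE H /\ admissible AA VV e q.
Proof. by case=> _ _ _ h4 _ qS; apply: h4; move: qS; rewrite mem_finsupp lt0n. Qed.

Lemma Kr_Nq (L : choiceType) AA VV (H : hgraph L) (x : bW (Kr H)) :
  inH AA VV H -> NB x = (ssval x).1.1 /\ qw x = (ssval x).1.2.
Proof.
move=> hH; have [sub1 _ _ _ _] := hH.
case: x => [[[e q] i] xW] /=.
have xW' : (e, q, i) \in Wlist H := xW.
move: (xW'); rewrite mem_Wlist => /and4P [eE qS _ _].
have [_ adm] := inH_adm hH qS.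
have eV := sub1 _ eE.
case: (adm) => [ds [dmu [vr [dmum [dmup Hv]]]]].
set x : bW (Kr H) := SeqSub xW.
have Nin : N_in x = [fset v in e | m1 \in sig_at q v].
  apply/fsetP => v; rewrite !inE /=.
  case: (boolP (v \in e)) => ve /=; last by rewrite andbF.
  rewrite (fsubsetP eV v ve) /=; case: ifP => // m.
  by case: fndP => //; rewrite dmum !inE ve m.
have Nout : N_out x = [fset v in e | p1 \in sig_at q v].
  apply/fsetP => v; rewrite !inE /=.
  case: (boolP (v \in e)) => ve /=; last by rewrite andbF.
  rewrite (fsubsetP eV v ve) /=; case: ifP => // m.
  by case: fndP => //; rewrite dmup !inE ve m.
have NE : NB x = e.
  apply/fsetP => v; rewrite /Defs.N in_fsetU Nin Nout !inE.
  case: (boolP (v \in e)) => ve //=.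
  by case: (orientP (proj1 (Hv v ve))) => ->; rewrite !inE.
split; first exact: NE.
have qE : q = (q_sigma q, q_mu q, q_rho q, (q_mum q, q_mup q)).
  by case: (q) => [[[? ?] ?] [? ?]].
rewrite /qw [in RHS]qE; congr (_, _, _, (_, _)); try apply/fmapP => y.
- case: (boolP (y \in e)) => ye; last first.
    have yN : y \notin NB x by rewrite NE.
    have : y \notin domf (q_sigma q) by rewrite ds.
    by move/not_fnd => ->; rewrite (fnd_fmapOut _ yN).
  have yN : y \in NB x by rewrite NE.
  rewrite (fnd_fmapIn _ yN) /= Nin Nout !inE ye sig_some ?ds //.
  by case: (orientP (proj1 (Hv y ye))) => ->; rewrite !inE.
- case: (boolP (y \in e)) => ye; last first.
    have yN : y \notin NB x by rewrite NE.
    have : y \notin domf (q_mu q) by rewrite dmu.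
    by move/not_fnd => ->; rewrite (fnd_fmapOut _ yN).
  have yN : y \in NB x by rewrite NE.
  rewrite (fnd_fmapIn _ yN) /= ye /=.
  have [_ [_ [_ [_ [H1 [H2 H3]]]]]] := Hv y ye.
  have [c mc] : exists c, (q_mu q).[? y] = Some c by apply: fnd_some; rewrite dmu.
  case: (orientP (proj1 (Hv y ye))) => E; rewrite E !inE /=.
  + by rewrite (H1 E) mc /=; congr Some; exact: RIneq.Rplus_0_r.
  + by rewrite (H2 E) mc /=; congr Some; exact: Raxioms.Rplus_0_l.
  + by have [a [b [c' [-> [-> [-> <-]]]]]] := H3 E.
- case: (boolP (y \in N_in x)) => yN; last first.
    have : y \notin domf (q_mum q) by rewrite dmum -Nin.
    by move/not_fnd => ->; rewrite (fnd_fmapOut _ yN).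
  rewrite (fnd_fmapIn _ yN) /=.
  move: (yN); rewrite Nin inE => /andP [ye m]; rewrite ye m /=.
  by have [a ->] : exists a, (q_mum q).[? y] = Some a by apply: fnd_some; rewrite dmum -Nin.
- case: (boolP (y \in N_out x)) => yN; last first.
    have : y \notin domf (q_mup q) by rewrite dmup -Nout.
    by move/not_fnd => ->; rewrite (fnd_fmapOut _ yN).
  rewrite (fnd_fmapIn _ yN) /=.
  move: (yN); rewrite Nout inE => /andP [ye m]; rewrite ye m /=.
  by have [a ->] : exists a, (q_mup q).[? y] = Some a by apply: fnd_some; rewrite dmup -Nout.
Qed.

Lemma Kr_mem (L : choiceType) (H : hgraph L) (x : bW (Kr H)) :
  (ssval x).1.1 \in hE H /\ (ssval x).1.2 \in finsupp (hchi H (ssval x).1.1).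
Proof.
case: x => [[[e q] i] xW] /=; have xW' : (e, q, i) \in Wlist H := xW.
by move: xW'; rewrite mem_Wlist => /and4P [].
Qed.

Lemma Wlist1 (L : choiceType) (H : hgraph L) e q :
  e \in hE H -> q \in finsupp (hchi H e) -> (e, q, 1%N) \in Wlist H.
Proof.
move=> eE qS; rewrite mem_Wlist eE qS /=.
by move: qS; rewrite mem_finsupp lt0n.
Qed.

Lemma inB_Kr (L : choiceType) AA VV (H : hgraph L) :
  inH AA VV H -> inB AA VV (Kr H).
Proof.
move=> hH; have [sub1 _ _ _ _] := hH.
have key (x : bW (Kr H)) : exists e q i, ssval x = (e, q, i) /\ e `<=` hV H /\
    admissible AA VV e q.
  have [eE qS] := Kr_mem x; have [_ adm] := inH_adm hH qS.
  case: x eE qS adm => [[[e q] i] xW] /= eE qS adm.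
  by exists e, q, i; split; [|split; [apply: sub1|]].
split.
- move=> v x a; have [e [q [i [E [eV adm]]]]] := key x.
  rewrite /= E; case: ifP => // /andP [ve m] ma.
  split; first exact: (fsubsetP eV).
  by case: adm => [_ [_ [_ [_ [_ Hv]]]]]; have [_ [_ [h _]]] := Hv v ve; apply: h.
- move=> x v a; have [e [q [i [E [eV adm]]]]] := key x.
  rewrite /= E; case: ifP => // /andP [ve m] ma.
  split; first exact: (fsubsetP eV).
  by case: adm => [_ [_ [_ [_ [_ Hv]]]]]; have [_ [_ [_ [h _]]]] := Hv v ve; apply: h.
- move=> x; have [e [q [i [E [eV adm]]]]] := key x.
  by rewrite /= E; case: adm => [_ [_ [vr _]]].
Qed.

Lemma card_Kr1 (L : choiceType) AA VV (H : hgraph L) e :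
  inH AA VV H -> #|[pred x : bW (Kr H) | NB x == e]| =
  if (e \in hE H) then (\sum_(q <- finsupp (hchi H e)) hchi H e q)%N else 0%N.
Proof.
move=> hH; rewrite -count_Wlist1 -card_seq_sub_pred; last exact: uniq_Wlist.
by apply: eq_card => x; rewrite !inE (Kr_Nq x hH).1.
Qed.

Lemma card_Kr2 (L : choiceType) AA VV (H : hgraph L) e q :
  inH AA VV H -> #|[pred x : bW (Kr H) | (NB x == e) && (qw x == q)]| =
  if (e \in hE H) && (q \in finsupp (hchi H e)) then hchi H e q else 0%N.
Proof.
move=> hH; rewrite -count_Wlist -card_seq_sub_pred; last exact: uniq_Wlist.
apply: eq_card => x; rewrite /in_mem /=.
have E1 := (Kr_Nq x hH).1; have E2 := (Kr_Nq x hH).2.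
by rewrite E1 E2.
Qed.

Lemma K_Kr (L : choiceType) AA VV (H : hgraph L) :
  inH AA VV H -> K (Kr H) = H.
Proof.
move=> hH; have [sub1 h2 h3 h4 h5] := hH.
have NQ (x : bW (Kr H)) := Kr_Nq x hH.
transitivity (HGraph (hV H) (hE H) (hmu H) (hchi H)); last by case: (H).
rewrite /K; congr HGraph.
- apply/fsetP => e; apply/imfsetP/idP => [[x _ ->]|eE].
    by rewrite (NQ x).1; case: (Kr_mem x).
  have : (0 < \sum_(q <- finsupp (hchi H e)) hchi H e q)%N by rewrite (h5 _ eE) -h2.
  case Es: (enum_fset (finsupp (hchi H e))) => [|q s]; first by rewrite big_nil.
  move=> _; have qS : q \in finsupp (hchi H e).
    by rewrite -[q \in _]/(q \in enum_fset _) Es inE eqxx.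
  exists (SeqSub (Wlist1 eE qS)) => //.
  by rewrite (NQ _).1.
- apply: FunctionalExtensionality.functional_extensionality => e.
  rewrite (card_Kr1 _ hH); case: ifP => eE; first by rewrite h5.
  by apply/esym/eqP; rewrite -leqn0 leqNgt -h2 eE.
apply: FunctionalExtensionality.functional_extensionality => e.
apply/fsfunP => q; rewrite fsfun_fun.
have chiE : hchi H e q = if (e \in hE H) && (q \in finsupp (hchi H e)) then hchi H e q else 0%N.
  case: (boolP (q \in finsupp (hchi H e))) => qS.
    by have [eE _] := inH_adm hH qS; rewrite /= eE.
  by rewrite andbF; apply/eqP; move: qS; rewrite mem_finsupp negbK.
case: ifP => qS'; first by rewrite (card_Kr2 _ _ hH) -chiE.
rewrite chiE; case: (boolP (q \in finsupp (hchi H e))) => qS; last by rewrite andbF.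
have [eE _] := inH_adm hH qS.
have x1 := Wlist1 eE qS.
move: qS'; suff -> : q \in [fset qw w | w : bW (Kr H)] by [].
apply/imfsetP; exists (SeqSub x1); first by [].
by rewrite (NQ _).2.
Qed.

Lemma sum_partition (T : finType) (K : choiceType) (S : {fset K}) (h : T -> K) (P : pred T) :
  (forall w, h w \in S) ->
  (\sum_(k <- S) #|[pred w | P w && (h w == k)]| = #|[pred w | P w]|)%N.
Proof.
move=> hS.
rewrite (eq_bigr (fun k => \sum_(w | P w) (if k == h w then 1 else 0))%N); last first.
  move=> k _; rewrite -sum1_card big_mkcond [RHS]big_mkcond /=.
  apply: eq_bigr => w _; rewrite inE; case: (P w) => //=.
  by rewrite eq_sym; case: (h w == k).
rewrite exchange_big /= -sum1_card [RHS]big_mkcond [LHS]big_mkcond /=.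
apply: eq_bigr => w _; rewrite inE; case: (P w) => //.
by rewrite sum_if_eq ?fset_uniq // hS.
Qed.

Lemma fset_neq1 : [fset m1] != [fset p1].
Proof. by apply/eqP => /fsetP /(_ p1); rewrite !inE. Qed.
Lemma fset_neq2 : [fset m1] != [fset m1; p1].
Proof. by apply/eqP => /fsetP /(_ p1); rewrite !inE. Qed.
Lemma fset_neq3 : [fset p1] != [fset m1; p1].
Proof. by apply/eqP => /fsetP /(_ m1); rewrite !inE. Qed.

Lemma sig_qw (L : choiceType) (B : bigraph L) (w : bW B) v : v \in NB w ->
  sig_at (qw w) v = if v \in N_in w then (if v \in N_out w then [fset m1; p1] else [fset m1])
                    else [fset p1].
Proof.
move=> vN; rewrite /sig_at /= (fnd_fmapIn _ vN) /=.
move: vN; rewrite /Defs.N in_fsetU.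
by case: (v \in N_in w); case: (v \in N_out w).
Qed.

Lemma mem_Nin (L : choiceType) (B : bigraph L) (w : bW B) v : v \in bV B ->
  (v \in N_in w) = (bin v w != None).
Proof. by move=> vV; rewrite !inE vV. Qed.
Lemma mem_Nout (L : choiceType) (B : bigraph L) (w : bW B) v : v \in bV B ->
  (v \in N_out w) = (bout w v != None).
Proof. by move=> vV; rewrite !inE vV. Qed.

Lemma adm_qw (L : choiceType) AA VV (B : bigraph L) (w : bW B) :
  inB AA VV B -> (forall a b, AA a -> AA b -> AA (Rplus a b)) ->
  admissible AA VV (NB w) (qw w).
Proof.
move=> [hin hout hd] AAp.
have m1p1 : (m1 == p1) = false by [].
split; first by [].
split; first by [].
split; first exact: hd.
split.
  change (N_in w = [fset v in NB w | m1 \in sig_at (qw w) v]).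
  apply/fsetP => v.
  rewrite (_ : (v \in [fset v in NB w | m1 \in sig_at (qw w) v]) = (v \in NB w) && (m1 \in sig_at (qw w) v)); last by rewrite !inE.
  rewrite andbC.
  case: (boolP (v \in NB w)) => vN; last first.
    by rewrite andbF; apply/negbTE; apply: contra vN => vi; rewrite /Defs.N in_fsetU vi.
  by rewrite andbT sig_qw //; case: (v \in N_in w); case: (v \in N_out w); rewrite !inE ?eqxx.
split.
  change (N_out w = [fset v in NB w | p1 \in sig_at (qw w) v]).
  apply/fsetP => v.
  rewrite (_ : (v \in [fset v in NB w | p1 \in sig_at (qw w) v]) = (v \in NB w) && (p1 \in sig_at (qw w) v)); last by rewrite !inE.
  rewrite andbC.
  case: (boolP (v \in NB w)) => vN; last first.
    by rewrite andbF; apply/negbTE; apply: contra vN => vi; rewrite /Defs.N in_fsetU vi orbT.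
  rewrite andbT sig_qw //; move: vN; rewrite /Defs.N in_fsetU.
  by case: (v \in N_in w); case: (v \in N_out w); rewrite //= !inE ?eqxx ?m1p1.
move=> v vN; have vV := fsubsetP (N_sub w) v vN.
rewrite sig_qw //.
have muE : (q_mu (qw w)).[? v] = Some (Rplus (wt (bin v w)) (wt (bout w v))).
  by rewrite /= (fnd_fmapIn _ vN).
rewrite muE.
case: (boolP (v \in N_in w)) => vi; case: (boolP (v \in N_out w)) => vo.
- move: (vi) (vo); rewrite mem_Nin ?mem_Nout //.
  case E1: (bin v w) => [a|] // _; case E2: (bout w v) => [b|] // _.
  have [_ Aa] := hin _ _ _ E1; have [_ Ab] := hout _ _ _ E2.
  split; first by rewrite /orientSet !inE eqxx !orbT.
  split; first by move=> x [<-]; apply: AAp.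
  split; first by rewrite /= (fnd_fmapIn _ vi) E1 => x [<-].
  split; first by rewrite /= (fnd_fmapIn _ vo) E2 => x [<-].
  split; first by move/eqP; rewrite eq_sym (negPf fset_neq2).
  split; first by move/eqP; rewrite eq_sym (negPf fset_neq3).
  move=> _; exists a, b, (Rplus a b).
  by rewrite /= (fnd_fmapIn _ vi) (fnd_fmapIn _ vo) E1 E2.
- move: (vi) (vo); rewrite mem_Nin ?mem_Nout // negbK.
  case E1: (bin v w) => [a|] // _ /eqP E2; rewrite E2.
  have [_ Aa] := hin _ _ _ E1.
  have a0 : Rplus a R0 = a by exact: RIneq.Rplus_0_r.
  split; first by rewrite /orientSet !inE eqxx.
  split; first by move=> x [<-]; rewrite a0.
  split; first by rewrite /= (fnd_fmapIn _ vi) E1 => x [<-].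
  split; first by rewrite /= (fnd_fmapOut _ vo).
  split; first by rewrite /= (fnd_fmapIn _ vi) E1 a0.
  split; first by move/eqP; rewrite (negPf fset_neq1).
  by move/eqP; rewrite (negPf fset_neq2).
- move: (vi) (vo); rewrite mem_Nin ?mem_Nout // negbK.
  move=> /eqP E1; case E2: (bout w v) => [b|] // _; rewrite E1.
  have [_ Ab] := hout _ _ _ E2.
  have b0 : Rplus R0 b = b by exact: Raxioms.Rplus_0_l.
  split; first by rewrite /orientSet !inE eqxx orbT.
  split; first by move=> x [<-]; rewrite b0.
  split; first by rewrite /= (fnd_fmapOut _ vi).
  split; first by rewrite /= (fnd_fmapIn _ vo) E2 => x [<-].
  split; first by move/eqP; rewrite eq_sym (negPf fset_neq1).
  split; first by rewrite /= (fnd_fmapIn _ vo) E2 b0.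
  by move/eqP; rewrite (negPf fset_neq3).
- by move: vN; rewrite /Defs.N in_fsetU (negPf vi) (negPf vo).
Qed.

Lemma K_inH (L : choiceType) AA VV (B : bigraph L) :
  (forall a b, AA a -> AA b -> AA (Rplus a b)) -> inB AA VV B -> inH AA VV (K B).
Proof.
move=> AAp hB; split.
- by move=> e /imfsetP [w _ ->]; apply: N_sub.
- move=> e; apply/imfsetP/card_gt0P => [[w _ ->]|[w]].
    by exists w; rewrite inE.
  by rewrite inE => /eqP <-; exists w.
- move=> e eE; apply/fsfunP => q; rewrite K_chi fsfunE.
  apply: eq_card0 => w; rewrite /in_mem /=; apply/negbTE; apply/negP => /andP [/eqP NE _].
  by case/negP: eE; rewrite -NE; apply: in_imfset.
- move=> e q; rewrite K_chi => /card_gt0P [w]; rewrite /in_mem /= => /andP [/eqP NE /eqP QE].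
  rewrite -NE -QE; split; first exact: in_imfset.
  exact: adm_qw.
- move=> e eE; rewrite (big_fset_incl _ (B := [fset qw w | w : bW B])); last first.
  + move=> q _ qS; apply/eqP; move: qS; rewrite mem_finsupp negbK.
    by move=> /eqP ->.
  + apply/fsubsetP => q; rewrite mem_finsupp K_chi; move=> H0.
    move: H0; rewrite -lt0n => /card_gt0P [w].
    by rewrite /in_mem /= => /andP [_ /eqP <-]; apply/imfsetP; exists w.
  rewrite (eq_bigr (fun q : quad L => #|[pred w : bW B | (NB w == e) && (qw w == q)]|)); last first.
    by move=> q _; rewrite K_chi.
  rewrite (@sum_partition _ _ _ (fun w : bW B => qw w) (fun w : bW B => NB w == e)) //.
  by move=> w; apply/imfsetP; exists w.
Qed.

Lemma isoB_refl (L : choiceType) t (B : bigraph L) : isoB t B B.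
Proof.
exists id, id; split; first by move=> ? ? _ _.
split; first exact: imfset_id.
split; first by exists id.
by do !split.
Qed.

Lemma isoB_trans (L : choiceType) t (B1 B2 B3 : bigraph L) :
  isoB t B1 B2 -> isoB t B2 B3 -> isoB t B1 B3.
Proof.
case=> f [g [inj [img [bij [hin [hout [hd t1]]]]]]].
case=> f' [g' [inj' [img' [bij' [hin' [hout' [hd' t2]]]]]]].
have fV v : v \in bV B1 -> f v \in bV B2 by move=> vV; rewrite -img; apply: in_imfset.
exists (f' \o f), (g' \o g); split.
  by move=> a b aV bV /= E; apply: inj => //; apply: inj' E; apply: fV.
split; first by rewrite imfset_comp img img'.
split; first exact: bij_comp.
split; first by move=> v w vV /=; rewrite hin' ?fV // hin.
split; first by move=> w v vV /=; rewrite hout' ?fV // hout.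
split; first by move=> w /=; rewrite hd' hd.
by move=> t_1 v vV /=; rewrite t1 // t2 // -(t1 t_1 v vV) fV.
Qed.

Lemma bin_Kr (L : choiceType) (H : hgraph L) (x : bW (Kr H)) e q i v :
  ssval x = (e, q, i) ->
  bin v x = if (v \in e) && (m1 \in sig_at q v) then (q_mum q).[? v] else None.
Proof. by case: x => [[[e' q'] i'] xW] /= [-> -> _]. Qed.

Lemma bout_Kr (L : choiceType) (H : hgraph L) (x : bW (Kr H)) e q i v :
  ssval x = (e, q, i) ->
  bout x v = if (v \in e) && (p1 \in sig_at q v) then (q_mup q).[? v] else None.
Proof. by case: x => [[[e' q'] i'] xW] /= [-> -> _]. Qed.

Lemma bdelta_Kr (L : choiceType) (H : hgraph L) (x : bW (Kr H)) e q i :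
  ssval x = (e, q, i) -> bdelta x = q_rho q.
Proof. by case: x => [[[e' q'] i'] xW] /= [_ -> _]. Qed.

Lemma binKr (L : choiceType) (B : bigraph L) (w : bW B) v : v \in bV B ->
  (if (v \in NB w) && (m1 \in sig_at (qw w) v) then (q_mum (qw w)).[? v] else None) = bin v w.
Proof.
move=> vV; case: (boolP (v \in N_in w)) => vi.
  have vN : v \in NB w by rewrite /Defs.N in_fsetU vi.
  rewrite vN sig_qw // vi.
  have -> : m1 \in (if v \in N_out w then [fset m1; p1] else [fset m1]).
    by case: ifP; rewrite !inE eqxx.
  rewrite /= (fnd_fmapIn _ vi) /=.
  by move: vi; rewrite mem_Nin //; case: (bin v w).
have -> : bin v w = None by move: vi; rewrite mem_Nin // negbK => /eqP.
case: (boolP (v \in NB w)) => vN //=.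
by rewrite sig_qw // (negPf vi) !inE.
Qed.

Lemma boutKr (L : choiceType) (B : bigraph L) (w : bW B) v : v \in bV B ->
  (if (v \in NB w) && (p1 \in sig_at (qw w) v) then (q_mup (qw w)).[? v] else None) = bout w v.
Proof.
move=> vV; case: (boolP (v \in N_out w)) => vo.
  have vN : v \in NB w by rewrite /Defs.N in_fsetU vo orbT.
  rewrite vN sig_qw // vo.
  have -> : p1 \in (if v \in N_in w then [fset m1; p1] else [fset p1]).
    by case: ifP; rewrite !inE eqxx ?orbT.
  rewrite /= (fnd_fmapIn _ vo) /=.
  by move: vo; rewrite mem_Nout //; case: (bout w v).
have -> : bout w v = None by move: vo; rewrite mem_Nout // negbK => /eqP.
case: (boolP (v \in NB w)) => vN //=.
rewrite sig_qw //; move: vN; rewrite /Defs.N in_fsetU (negPf vo) orbF => vi.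
by rewrite vi !inE.
Qed.

Lemma iso_KrK (L : choiceType) t (B : bigraph L) :
  isoB t (Kr (K B)) B /\ isoB t B (Kr (K B)).
Proof.
pose P (w : bW B) := [pred w' : bW B | (NB w' == NB w) && (qw w' == qw w)].
pose idx (w : bW B) := index w (enum (P w)).
have inP w : w \in enum (P w) by rewrite mem_enum /in_mem /= !eqxx.
have hmem w : (NB w, qw w, (idx w).+1) \in Wlist (K B).
  rewrite mem_Wlist; apply/and4P; split => //.
  - by apply/imfsetP; exists w.
  - rewrite mem_finsupp K_chi -lt0n; apply/card_gt0P; exists w.
    by rewrite /in_mem /= !eqxx.
  - by rewrite K_chi cardE; rewrite index_mem.
pose h (w : bW B) : bW (Kr (K B)) := SeqSub (hmem w).
have hinj : injective h.
  move=> w1 w2 /(congr1 (@ssval _ _)) E.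
  have E1 : NB w1 = NB w2 := congr1 (fun t => t.1.1) E.
  have E2 : qw w1 = qw w2 := congr1 (fun t => t.1.2) E.
  have E3 : (idx w1).+1 = (idx w2).+1 := congr1 (fun t => t.2) E.
  have E4 : enum (P w1) = enum (P w2) by rewrite /P E1 E2.
  have e1 := nth_index w1 (inP w1); have e2 := nth_index w1 (inP w2).
  have E5 : index w1 (enum (P w1)) = index w2 (enum (P w2)) := succn_inj E3.
  exact: (etrans (esym e1) (etrans (f_equal2 (nth w1) E4 E5) e2)).
have hsurj x : exists w, h w = x.
  case: x => [[[e q] i] xW]; have xW' : (e, q, i) \in Wlist (K B) := xW.
  move: (xW'); rewrite mem_Wlist => /and4P [eE qS i0 iq].
  case/imfsetP: eE => w0 _ _.
  rewrite K_chi in iq; set Q := [pred w | (NB w == e) && (qw w == q)] in iq.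
  have ilt : i.-1 < size (enum Q) by rewrite -cardE (prednK i0).
  have wQ := mem_nth w0 ilt.
  move: (wQ); rewrite mem_enum /in_mem /= => /andP [/eqP Nw /eqP Qw].
  exists (nth w0 (enum Q) i.-1); apply: val_inj => /=.
  rewrite /idx /P Nw Qw -/Q index_uniq ?enum_uniq // prednK //.
have hbij : bijective h.
  apply: (inj_card_bij hinj).
  rewrite -(card_codom hinj); apply: subset_leq_card; apply/subsetP => x _.
  by have [w <-] := hsurj x; apply: codom_f.
have [g gh hg] := hbij.
have hval w : ssval (h w) = (NB w, qw w, (idx w).+1) by [].
split.
  exists id, g; split; first by move=> ? ? _ _.
  split; first exact: imfset_id.
  split; first by exists h.
  split.
    move=> v x vV; rewrite -[in RHS](hg x).
    by rewrite (bin_Kr _ (hval (g x))) binKr.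
  split.
    move=> x v vV; rewrite -[in RHS](hg x).
    by rewrite (bout_Kr _ (hval (g x))) boutKr.
  split; last by [].
  by move=> x; rewrite -[in RHS](hg x) (bdelta_Kr (hval (g x))).
exists id, h; split; first by move=> ? ? _ _.
split; first exact: imfset_id.
split; first exact: hbij.
split; first by move=> v w vV; rewrite (bin_Kr _ (hval w)) binKr.
split; first by move=> w v vV; rewrite (bout_Kr _ (hval w)) boutKr.
split; last by [].
by move=> w; rewrite (bdelta_Kr (hval w)).
Qed.

Lemma Kr_info (L : choiceType) AA VV (H : hgraph L) (x : bW (Kr H)) :
  inH AA VV H -> exists e q i, [/\ ssval x = (e, q, i), e \in hE H,
    q \in finsupp (hchi H e), admissible AA VV e q & (0 < i <= hchi H e q)%N].
Proof.
move=> hH; case: x => [[[e q] i] xW] /=; have xW' : (e, q, i) \in Wlist H := xW.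
move: xW'; rewrite mem_Wlist => /and4P [eE qS i0 iq].
have [_ adm] := inH_adm hH qS.
by exists e, q, i; split => //; rewrite i0.
Qed.

Lemma Kr_iso (L : choiceType) AA VV t (H H' : hgraph L) :
  inH AA VV H -> inH AA VV H' -> isoH AA VV t H H' -> isoB t (Kr H) (Kr H').
Proof.
move=> hH hH' [f [inj [img [hEf [hmuf [hchf t1]]]]]].
have [sub1 _ _ _ h5] := hH; have [sub1' _ _ _ h5'] := hH'.
have gmem (x : bW (Kr H)) :
    (f @` (ssval x).1.1, pushq f (ssval x).1.2, (ssval x).2) \in Wlist H'.
  have [e [q [i [E eE qS adm /andP [i0 iq]]]]] := Kr_info x hH.
  rewrite E /= mem_Wlist -hEf ?sub1 // eE /=.
  rewrite mem_finsupp (hchf _ _ eE adm) -mem_finsupp qS i0 /=.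
  by [].
pose g (x : bW (Kr H)) : bW (Kr H') := SeqSub (gmem x).
have gval x : ssval (g x) = (f @` (ssval x).1.1, pushq f (ssval x).1.2, (ssval x).2) by [].
have ginj : injective g.
  move=> x y /(congr1 (@ssval _ _)) E.
  have E1 : f @` (ssval x).1.1 = f @` (ssval y).1.1 := congr1 (fun t => t.1.1) E.
  have E2 : pushq f (ssval x).1.2 = pushq f (ssval y).1.2 := congr1 (fun t => t.1.2) E.
  have E3 : (ssval x).2 = (ssval y).2 := congr1 (fun t => t.2) E.
  have [e [q [i [Ex eE qS adm _]]]] := Kr_info x hH.
  have [e' [q' [i' [Ey eE' qS' adm' _]]]] := Kr_info y hH.
  rewrite Ex Ey /= in E1 E2 E3.
  have ee : e = e' by apply: (imf_inj_sub inj (sub1 _ eE) (sub1 _ eE') E1).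
  have qq : q = q'.
    apply: (pushq_inj (D := hV H)) E2 => //.
    - exact: (qsub_trans (adm_qsub adm) (sub1 _ eE)).
    - exact: (qsub_trans (adm_qsub adm') (sub1 _ eE')).
  apply: val_inj; rewrite /= Ex Ey ee qq E3 //.
have hEimg : hE H' = [fset (f @` e) | e : {fset L} in hE H].
  apply/fsetP => e'; apply/idP/imfsetP => [e'E|[e eE ->]]; last first.
    by rewrite -hEf ?sub1.
  have e'V := sub1' _ e'E.
  pose e := [fset v in hV H | f v \in e'].
  have eV : e `<=` hV H by apply/fsubsetP => v; rewrite !inE => /andP [].
  have fe : e' = f @` e.
    apply: (img_eq (D := hV H)) => //; first by rewrite img.
    by move=> v vV; rewrite !inE vV.
  by exists e => //; rewrite hEf // -fe.
have gbij : bijective g.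
  apply: (inj_card_bij ginj).
  rewrite !card_seq_sub; [|exact: uniq_Wlist|exact: uniq_Wlist].
  rewrite !size_Wlist (eq_big_seq _ h5) (eq_big_seq _ h5') hEimg big_imfset /=.
    rewrite (eq_big_seq _ (fun e eE => hmuf e eE)) //.
  move=> a b aE bE; exact: (imf_inj_sub inj (sub1 _ aE) (sub1 _ bE)).
exists f, g; split; first exact: inj.
split; first exact: img.
split; first exact: gbij.
split.
  move=> v x vV; have [e [q [i [E eE qS adm _]]]] := Kr_info x hH.
  have Eg : ssval (g x) = (f @` e, pushq f q, i) by rewrite gval E.
  have eV := sub1 _ eE; have qs := qsub_trans (adm_qsub adm) eV.
  rewrite (bin_Kr _ Eg) (bin_Kr _ E) (mem_imf_inj inj eV vV).
  case: (v \in e) => //=.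
  rewrite (sig_at_push qs inj vV).
  case: (m1 \in sig_at q v) => //.
  by case: qs => _ _ h3 _; rewrite (_ : q_mum (pushq f q) = pushf f (q_mum q)) // (pushf_in h3 inj vV).
split.
  move=> x v vV; have [e [q [i [E eE qS adm _]]]] := Kr_info x hH.
  have Eg : ssval (g x) = (f @` e, pushq f q, i) by rewrite gval E.
  have eV := sub1 _ eE; have qs := qsub_trans (adm_qsub adm) eV.
  rewrite (bout_Kr _ Eg) (bout_Kr _ E) (mem_imf_inj inj eV vV).
  case: (v \in e) => //=.
  rewrite (sig_at_push qs inj vV).
  case: (p1 \in sig_at q v) => //.
  by case: qs => _ _ _ h4; rewrite (_ : q_mup (pushq f q) = pushf f (q_mup q)) // (pushf_in h4 inj vV).
split; last exact: t1.
move=> x; have [e [q [i [E eE qS adm _]]]] := Kr_info x hH.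
have Eg : ssval (g x) = (f @` e, pushq f q, i) by rewrite gval E.
by rewrite (bdelta_Kr Eg) (bdelta_Kr E).
Qed.

Lemma isoB_isoH (L : choiceType) AA VV t (B B' : bigraph L) :
  isoB t B B' -> isoH AA VV t (K B) (K B').
Proof.
case=> f [g [inj [img [bij [hin [hout [hd t1]]]]]]].
exact: (K_iso inj img hin hout hd bij).
Qed.

Unset Implicit Arguments.
Local Close Scope fset_scope.
Local Close Scope fmap_scope.

Theorem mainTheorem4 (L : choiceType) (t : nat) (AA VV : R -> Prop) :
  (t <= 1)%N ->
  (exists a, AA a) ->
  (forall a b, AA a -> AA b -> AA (Rplus a b)) ->
  (exists x, VV x) ->
  (* (1) K is well defined *)
  (forall B : bigraph L, inB AA VV B -> inH AA VV (K B)) /\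
  (* (2) K_r is well defined, K o K_r = id, hence K is surjective *)
  (forall H : hgraph L, inH AA VV H -> inB AA VV (Kr H) /\ K (Kr H) = H) /\
  (forall H : hgraph L, inH AA VV H -> exists B, inB AA VV B /\ K B = H) /\
  (* (3) K_r (K B) is type-t isomorphic to B *)
  (forall B : bigraph L, inB AA VV B -> isoB t (Kr (K B)) B) /\
  (* (4) K induces a bijection on type-t isomorphism classes *)
  (exists (Kt : (bigraph L -> Prop) -> (hgraph L -> Prop))
          (Kti : (hgraph L -> Prop) -> (bigraph L -> Prop)),
     (forall B, inB AA VV B -> Kt (clsB AA VV t B) = clsH AA VV t (K B)) /\
     (forall H, inH AA VV H -> Kti (clsH AA VV t H) = clsB AA VV t (Kr H)) /\
     (forall B, inB AA VV B -> Kti (Kt (clsB AA VV t B)) = clsB AA VV t B) /\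
     (forall H, inH AA VV H -> Kt (Kti (clsH AA VV t H)) = clsH AA VV t H)).
Proof.
move=> _ _ AAp _.
have PE := PropExtensionality.propositional_extensionality.
have FE := @FunctionalExtensionality.functional_extensionality.
split; first by move=> B hB; apply: K_inH.
split; first by move=> H hH; split; [apply: inB_Kr hH|apply: K_Kr hH].
split; first by move=> H hH; exists (Kr H); split; [apply: inB_Kr hH|apply: K_Kr hH].
split; first by move=> B _; case: (iso_KrK t B).
pose Kt (P : bigraph L -> Prop) := fun H' => exists B, P B /\ clsH AA VV t (K B) H'.
pose Kti (Q : hgraph L -> Prop) := fun B' => exists H, Q H /\ clsB AA VV t (Kr H) B'.
have Eq1 B : inB AA VV B -> Kt (clsB AA VV t B) = clsH AA VV t (K B).
  move=> hB; apply: FE => H'; apply: PE; split.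
    case=> B1 [[hB1 iB] [hH' iH]]; split => //.
    exact: (isoH_trans (K_inH AAp hB) (isoB_isoH AA VV iB) iH).
  by case=> hH' iH; exists B; split; [split; [exact: hB|exact: isoB_refl]|split].
have Eq2 H : inH AA VV H -> Kti (clsH AA VV t H) = clsB AA VV t (Kr H).
  move=> hH; apply: FE => B'; apply: PE; split.
    case=> H1 [[hH1 iH] [hB' iB]]; split => //.
    exact: (isoB_trans (Kr_iso hH hH1 iH) iB).
  by case=> hB' iB; exists H; split; [split; [exact: hH|exact: isoH_refl]|split].
exists Kt, Kti; split; first exact: Eq1.
split; first exact: Eq2.
split.
  move=> B hB; rewrite Eq1 // Eq2; last exact: K_inH.
  have [i1 i2] := iso_KrK t B.
  apply: FE => B'; apply: PE; split; case=> hB' iB; split => //.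
    exact: (isoB_trans i2 iB).
  exact: (isoB_trans i1 iB).
move=> H hH; rewrite Eq2 // Eq1; last exact: inB_Kr hH.
by rewrite (K_Kr hH).
Qed.
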